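(* Let $A$ be a finite set. The map $\mathrm{Ch}(Y^A)\ni\mathbf c\mapsto\overset{*}{<}_{\mathbf c}\in(R(A),\sqsupseteq)$ and the map $(R(A),\sqsupseteq)\ni\overset{*}{<}\mapsto\mathbf c^{\overset{*}{<}}\in\mathrm{Ch}(Y^A)$ are mutually inverse $\Sigma_A$-equivariant isomorphisms of posets, where $\mathrm{Ch}(Y^A)$ is ordered by $\mathbf c\le\mathbf e$ iff there is a morphism from $\mathbf c$ to $\mathbf e$ in the cube chain category.
   Context: $Y^A$ is the bi-pointed precubical set where $Y^A[k]$ is the set of pairs $(c,<)$ with $c:A\to\{0,*,1\}$, $|c^{-1}( * )|=k$, and $<$ a strict total order on $c^{-1}( * )$; if $c^{-1}( * )=\{a_1<\dots<a_k\}$ then the face $d^\varepsilon_i(c,<)=(c',<')$ where $c'(a_i)=\varepsilon$, $c'=c$ elsewhere, $<'$ the restriction of $<$; initial vertex $(\text{const}_0,\emptyset)$, final vertex $(\text{const}_1,\emptyset)$. For a cube $x$, $d^0(x)$, $d^1(x)$ are the vertices obtained by repeatedly applying $d^0_1$, resp. $d^1_1$. A cube chain is a sequence $\mathbf c=((c_1,<_1),\dots,(c_l,<_l))$ of cubes of positive dimension with $d^0$ of the first equal to the initial vertex, $d^1$ of the last equal to the final vertex, and $d^1$ of each equal to $d^0$ of the next; it corresponds to a bi-pointed precubical map from the serial wedge $\square^{n_1}\vee\dots\vee\square^{n_l}$ of standard cubes to $Y^A$. The cube chain category $\mathrm{Ch}(Y^A)$ has these maps as objects and as morphisms $\mathbf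 a\to\mathbf b$ the precubical maps $f$ between the wedges with $\mathbf b\circ f=\mathbf a$. For a cube chain $\mathbf c$ and $a\in A$ there is a unique $h_{\mathbf c}(a)$ with $c_{h_{\mathbf c}(a)}(a)=*$; define $\overset{*}{<}_{\mathbf c}=(\overset{x}{<}_{\mathbf c},\overset{y}{<}_{\mathbf c})$ by $a\overset{x}{<}_{\mathbf c}b$ iff $h_{\mathbf c}(a)<h_{\mathbf c}(b)$, and $a\overset{y}{<}_{\mathbf c}b$ iff $h_{\mathbf c}(a)=h_{\mathbf c}(b)=j$ and $a<_jb$. A strict partial order is semi-linear if induced by a (unique) surjection $h:A\to\{1,\dots,l\}$ ($a<b$ iff $h(a)<h(b)$). A double order on $A$ is a pair $(\overset{x}{<},\overset{y}{<})$ of strict partial orders such that any two distinct elements are comparable by one of them; it is regular if $\overset{x}{<}$ is semi-linear and $a\overset{x}{<}b$ implies $a,b$ are not $\overset{y}{<}$-comparable. $R(A)$ is the set of regular double orders, and $\overset{*}{<}_1\sqsubseteq\overset{*}{<}_2$ iff $\overset{x}{<}_1\subseteq\overset{x}{<}_2$ and $\overset{y}{<}_1\supseteq\overset{y}{<}_2$ ($\sqsupseteq$ is the opposite order). For $\overset{*}{<}\in R(A)$ with $h=h(\overset{x}{<}):A\to\{1,\dots,l\}$, let $c_j(a)=1$ if $h(a)<j$, $*$ if $h(a)=j$, $0$ if $h(a)>j$, let $<_j$ be the restriction of $\overset{y}{<}$ to $h^{-1}(j)$, and $\mathbf c^{\overset{*}{<}}=((c_1,<_1),\dots,(c_l,<_l))$.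 $\Sigma_A$ acts on $Y^A$ by $(c,<)\sigma=(c\circ\sigma,<\sigma)$ with $a(<\sigma)b$ iff $\sigma(a)<\sigma(b)$, on cube chains cubewise, and on double orders by $(\overset{x}{<},\overset{y}{<})\sigma=(\overset{x}{<}\sigma,\overset{y}{<}\sigma)$. *)

(* Defs.v *)
From mathcomp Require Import all_boot all_order all_fingroup.
Set Implicit Arguments. Unset Strict Implicit. Unset Printing Implicit Defensive.

(* Values in {0,star,1} are encoded as option bool:
   Some false = 0, None = *, Some true = 1. *)

Section CubeChains.
Variable A : finType.

(* A cube (c,<) of Y^A: c : A -> {0,star,1} and the strict total order < on
   the star set of c given as the list of the starred elements in increasing order. *)
Definition cube := ({ffun A -> option bool} * seq A)%type.

Definition is_cube (x : cube) : bool :=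
  uniq x.2 && [forall a, (x.1 a == None) == (a \in x.2)].

Definition cdim (x : cube) : nat := size x.2.

(* face d^e_i, with i 0-based (i < dim) *)
Definition yface (e : bool) (i : nat) (x : cube) : cube :=
  ([ffun b => if (b \in x.2) && (index b x.2 == i) then Some e else x.1 b],
   [seq b <- x.2 | index b x.2 != i]).

Definition init_v : cube := ([ffun => Some false], [::]).
Definition final_v : cube := ([ffun => Some true], [::]).

Definition vd (e : bool) (x : cube) : cube :=
  ([ffun a => if x.1 a is None then Some e else x.1 a], [::]).

(* cube chains (the empty chain is a cube chain iff init_v = final_v, i.e. A empty) *)
Definition is_chain (cc : seq cube) : Prop :=
  (forall i, i < size cc -> is_cube (nth init_v cc i) /\ 0 < cdim (nth init_v cc i))
  /\ (forall i, i < size cc ->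
        vd false (nth init_v cc i) =
        (if i is i'.+1 then vd true (nth init_v cc i') else init_v))
  /\ (if cc is [::] then init_v else vd true (last init_v cc)) = final_v.

(* A cell of the wedge  □^{n_0} ∨ ... ∨ □^{n_{l-1}}  (ns = [n_0;...;n_{l-1}])
   is a pair (j, x) with j < l and x : {0,star,1}^{n_j}, where the final vertex of
   □^{n_j} is identified with the initial vertex of □^{n_(j+1)}; the canonical
   representative is the one in □^{n_(j+1)}. *)
Definition wcell := (nat * seq (option bool))%type.

Definition is_wcell (ns : seq nat) (z : wcell) : bool :=
  (z.1 < size ns) && (size z.2 == nth 0 ns z.1)
  && ~~ ((z.1.+1 < size ns) && all (fun b => b == Some true) z.2).

Definition wnorm (ns : seq nat) (z : wcell) : wcell :=
  if (z.1.+1 < size ns) && all (fun b => b == Some true) z.2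
  then (z.1.+1, nseq (nth 0 ns z.1.+1) (Some false)) else z.

Definition wdim (z : wcell) : nat := count (fun b => b == None) z.2.

(* replace the i-th (0-based) star by e : the standard cube face d^e_{i+1} *)
Fixpoint set_star (e : bool) (i : nat) (x : seq (option bool)) :=
  match x with
  | [::] => [::]
  | None :: x' => if i is i'.+1 then None :: set_star e i' x' else Some e :: x'
  | b :: x' => b :: set_star e i x'
  end.

Definition wface (ns : seq nat) (e : bool) (i : nat) (z : wcell) : wcell :=
  wnorm ns (z.1, set_star e i z.2).

Definition precubical_map (ns ms : seq nat) (F : wcell -> wcell) : Prop :=
  forall z, is_wcell ns z ->
    [/\ is_wcell ms (F z), wdim (F z) = wdim z &
        forall e i, i < wdim z -> F (wface ns e i z) = wface ms e i (F z)].

Definition dims (cc : seq cube) : seq nat := map cdim cc.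

Definition chain_map (cc : seq cube) (z : wcell) : cube :=
  let x := nth init_v cc z.1 in
  ([ffun a => if a \in x.2 then nth None z.2 (index a x.2) else x.1 a],
   [seq a <- x.2 | nth None z.2 (index a x.2) == None]).

(* order on Ch(Y^A): there is a morphism cc -> ee in the cube chain category *)
Definition chain_le (cc ee : seq cube) : Prop :=
  exists F, precubical_map (dims cc) (dims ee) F
            /\ forall z, is_wcell (dims cc) z -> chain_map ee (F z) = chain_map cc z.

Definition dorder := (rel A * rel A)%type.

Definition strict_po (r : rel A) : Prop :=
  (forall a, ~~ r a a) /\ (forall a b c, r a b -> r b c -> r a c).

Definition semilinear (r : rel A) : Prop :=
  exists (h : A -> nat) (l : nat),
    (forall a, 0 < h a <= l) /\ (forall k, 0 < k <= l -> exists a, h a = k)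
    /\ (forall a b, r a b = (h a < h b)).

Definition is_double_order (d : dorder) : Prop :=
  strict_po d.1 /\ strict_po d.2 /\
  (forall a b, a != b -> [|| d.1 a b, d.1 b a, d.2 a b | d.2 b a]).

Definition regular (d : dorder) : Prop :=
  is_double_order d /\ semilinear d.1 /\
  (forall a b, d.1 a b -> ~~ d.2 a b /\ ~~ d.2 b a).

Definition dle (d1 d2 : dorder) : Prop :=
  (forall a b, d1.1 a b -> d2.1 a b) /\ (forall a b, d2.2 a b -> d1.2 a b).

Definition deq (d1 d2 : dorder) : Prop := d1.1 =2 d2.1 /\ d1.2 =2 d2.2.

(* h_c (0-based) and the double order of a cube chain *)
Definition hc (cc : seq cube) (a : A) : nat := find (fun x : cube => x.1 a == None) cc.

Definition dorder_of (cc : seq cube) : dorder :=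
  (fun a b => hc cc a < hc cc b,
   fun a b => (hc cc a == hc cc b) &&
              (index a (nth init_v cc (hc cc a)).2 < index b (nth init_v cc (hc cc a)).2)).

(* the surjection h(<^x) : A -> {1..l}: h a = 1 + number of levels below a,
   levels being identified with their strict down-sets *)
Definition downset (r : rel A) (b : A) : {set A} := [set c | r c b].
Definition hx (r : rel A) (a : A) : nat :=
  #|[set downset r b | b in [set b | r b a]]|.+1.
Definition nlevels (r : rel A) : nat := #|[set downset r b | b : A]|.

Definition cstar (d : dorder) : seq cube :=
  mkseq (fun j =>
    ([ffun a => if hx d.1 a < j.+1 then Some true
                else if hx d.1 a == j.+1 then None else Some false],
     sort (fun a b => (a == b) || d.2 a b)
          [seq a <- enum A | hx d.1 a == j.+1]))
    (nlevels d.1).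

Definition act_cube (x : cube) (s : {perm A}) : cube :=
  ([ffun a => x.1 (s a)], map (s^-1)%g x.2).
Definition act_chain (cc : seq cube) (s : {perm A}) : seq cube :=
  map (fun x => act_cube x s) cc.
Definition act_dorder (d : dorder) (s : {perm A}) : dorder :=
  (fun a b => d.1 (s a) (s b), fun a b => d.2 (s a) (s b)).

End CubeChains.

(* Main.v *)
Require Import Defs.
From mathcomp Require Import all_boot all_order all_fingroup.
From mathcomp Require Import zify.
Set Implicit Arguments. Unset Strict Implicit. Unset Printing Implicit Defensive.

Section S.
Variable A : finType.
Implicit Types cc ee : seq (cube A).

Definition tval cc (a : A) k : option bool :=
  (if k is k'.+1 then vd true (nth (init_v A) cc k') else init_v A).1 a.

Lemma chain_t cc : is_chain cc -> forall a k, k <= size cc ->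
  tval cc a k = if has (fun x : cube A => x.1 a == None) (take k cc) then Some true else Some false.
Proof.
move=> [H1 [H2 H3]] a; elim=> [|k IH] Hk.
  by rewrite take0 /tval /= ffunE.
have Hk' : k < size cc by [].
rewrite (take_nth (init_v A) Hk') has_rcons.
have := H2 k Hk' => /(congr1 (fun x : cube A => x.1 a)); rewrite /vd /= ffunE => E.
rewrite /tval ffunE.
case Hc: ((nth (init_v A) cc k).1 a) => [b|] /=; last by [].
rewrite Hc in E. rewrite -IH; [exact: E | exact: ltnW].
Qed.

Lemma chain_val cc : is_chain cc -> forall a, hc cc a < size cc /\
  forall k, k < size cc -> (nth (init_v A) cc k).1 a =
     if k < hc cc a then Some false else if k == hc cc a then None else Some true.
Proof.
move=> Hc a.
have Ht := chain_t Hc a.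
have Hhas : has (fun x : cube A => x.1 a == None) cc.
  case: Hc => [_ [_ H3]].
  have := Ht (size cc) (leqnn _). rewrite take_size.
  case: cc H3 {Ht} => [|x s] H3.
    by move: H3 => /(congr1 (fun x : cube A => x.1 a)); rewrite /= !ffunE.
  rewrite /tval /= => E. move: H3 => /(congr1 (fun y : cube A => y.1 a)). rewrite -(nth_last (init_v A)) /= E ffunE. by case: (_ || _).
split; first by rewrite -has_find.
move=> k Hk.
case: Hc => [_ [H2 _]].
have := H2 k Hk => /(congr1 (fun x : cube A => x.1 a)); rewrite /vd /= ffunE => E.
have := Ht k (ltnW Hk); rewrite /tval -E has_take // => Ht'.
rewrite -/(hc cc a) in Ht'.
case Hc: ((nth (init_v A) cc k).1 a) => [b|] in Ht' *.
- case: (ltngtP k (hc cc a)) => Hkh.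
  + by move: Ht'; rewrite ltnNge (ltnW Hkh).
  + by rewrite Ht' Hkh.
  + by move/(nth_find (init_v A)): Hhas; rewrite -/(hc cc a) -Hkh Hc.
- case: (ltngtP k (hc cc a)) => Hkh //.
  + by have := before_find (init_v A) Hkh; rewrite Hc.
  + by move: Ht'; rewrite Hkh.
Qed.


Section Semi.
Variables (r : rel A) (h : A -> nat) (l : nat).
Hypotheses (H1 : forall a, 0 < h a <= l) (H2 : forall k, 0 < k <= l -> exists a, h a = k)
  (H3 : forall a b, r a b = (h a < h b)).

Lemma semi_card m : m <= l -> #|[set downset r b | b in [set b | h b <= m]]| = m.
Proof.
move=> Hm.
pose g := fun k : 'I_m => [set c | h c <= k].
have -> : [set downset r b | b in [set b | h b <= m]] = g @: setT.
  apply/setP => X; apply/imsetP/imsetP.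
  - case=> b; rewrite inE => Hb ->.
    have Hb1 := H1 b.
    have Hlt : (h b).-1 < m by lia.
    exists (Ordinal Hlt); first by rewrite inE.
    apply/setP => c; rewrite !inE H3 /=. lia.
  - case=> k _ ->.
    have [b Hb] : exists b, h b = k.+1 by apply: H2; have := ltn_ord k; lia.
    exists b; first by rewrite inE Hb.
    apply/setP => c; rewrite !inE H3 Hb /=. lia.
rewrite card_imset ?cardsT ?card_ord //.
move=> k k' E. apply/val_inj => /=.
have Hk := ltn_ord k. have Hk' := ltn_ord k'.
case: (ltngtP k k') => // Hkk.
- have [c Hc] : exists c, h c = k.+1 by apply: H2; lia.
  have := congr1 (fun S : {set A} => c \in S) E; rewrite /g !inE Hc /=. lia.
- have [c Hc] : exists c, h c = k'.+1 by apply: H2; lia.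
  have := congr1 (fun S : {set A} => c \in S) E; rewrite /g !inE Hc /=. lia.
Qed.

Lemma semi_hx a : hx r a = h a.
Proof.
rewrite /hx.
have -> : [set b | r b a] = [set b | h b <= (h a).-1].
  apply/setP => b; rewrite !inE H3. have := H1 a. lia.
rewrite semi_card; have := H1 a; lia.
Qed.

Lemma semi_nlevels : nlevels r = l.
Proof.
rewrite /nlevels -(semi_card (leqnn l)).
apply: eq_card => X. apply/imsetP/imsetP; case=> b Hb ->; exists b => //.
by rewrite inE; case/andP: (H1 b).
Qed.
End Semi.


Lemma cube_mem (x : cube A) a : is_cube x -> (a \in x.2) = (x.1 a == None).
Proof. by case/andP => _ /forallP /(_ a) /eqP. Qed.

Lemma chain_None cc : is_chain cc -> forall a k, k < size cc ->
  ((nth (init_v A) cc k).1 a == None) = (k == hc cc a).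
Proof.
move=> Hc a k Hk; have [_ ->] := chain_val Hc a; last by [].
by case: ltngtP.
Qed.

Lemma chain_mem cc : is_chain cc -> forall a k, k < size cc ->
  (a \in (nth (init_v A) cc k).2) = (k == hc cc a).
Proof.
move=> Hc a k Hk. have [[H1 _] _] := (Hc.1 k Hk, 0).
by rewrite cube_mem // chain_None.
Qed.

Lemma chain_hc_lt cc : is_chain cc -> forall a, hc cc a < size cc.
Proof. by move=> Hc a; case: (chain_val Hc a). Qed.

Lemma chain_level_ex cc : is_chain cc -> forall k, k < size cc -> exists a, hc cc a = k.
Proof.
move=> Hc k Hk. have [H1 H2] := Hc.1 k Hk.
case E: (nth (init_v A) cc k).2 => [|a L]; first by rewrite /cdim E in H2.
exists a. have : a \in (nth (init_v A) cc k).2 by rewrite E mem_head.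
by rewrite chain_mem // => /eqP.
Qed.

Lemma dorder_regular cc : is_chain cc -> regular (dorder_of cc).
Proof.
move=> Hc.
have Hsemi : semilinear (dorder_of cc).1.
  exists (fun a => (hc cc a).+1), (size cc). split; last split.
  - by move=> a; rewrite /= chain_hc_lt.
  - move=> k Hk. have [a Ha] := chain_level_ex Hc (k := k.-1) ltac:(lia).
    exists a; rewrite Ha; lia.
  - by move=> a b.
split; last split => //.
- split; last split.
  + by split; [move=> a; rewrite /= ltnn | move=> a b c; apply: ltn_trans].
  + split; first by move=> a; rewrite /= ltnn andbF.
    move=> a b c /= /andP[/eqP e1 i1] /andP[/eqP e2 i2].
    rewrite e1 e2 eqxx /=. rewrite e1 e2 in i1. rewrite e2 in i2. exact: ltn_trans i2.
  + move=> a b ab /=. case: (ltngtP (hc cc a) (hc cc b)) => //= e.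
    rewrite e. set L := (nth (init_v A) cc (hc cc b)).2.
    have ma : a \in (nth (init_v A) cc (hc cc b)).2 by rewrite chain_mem ?e ?chain_hc_lt.
    have mb : b \in (nth (init_v A) cc (hc cc b)).2 by rewrite chain_mem ?chain_hc_lt.
    case: (ltngtP (index a L) (index b L)) => //= ie.
    move: ab. by rewrite -(nth_index a ma) ie (nth_index a mb) eqxx.
- move=> a b /= ab. split; apply/negP => /andP[/eqP e _]; move: ab; rewrite e ltnn //.
Qed.


Definition Rd (d : dorder A) : rel A := fun a b => (a == b) || d.2 a b.

Definition lcube (h : A -> nat) (R : rel A) (j : nat) : cube A :=
  ([ffun a => if h a < j.+1 then Some true else if h a == j.+1 then None else Some false],
   sort R [seq a <- enum A | h a == j.+1]).

Lemma cstar_eq (d : dorder A) h l :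
  (forall a, 0 < h a <= l) -> (forall k, 0 < k <= l -> exists a, h a = k) ->
  (forall a b, d.1 a b = (h a < h b)) ->
  cstar d = mkseq (lcube h (Rd d)) l.
Proof.
move=> H1 H2 H3. rewrite /cstar (semi_nlevels H1 H2 H3). apply: eq_mkseq => j.
rewrite /lcube; congr pair.
  by apply/ffunP => a; rewrite !ffunE (semi_hx H1 H2 H3).
by congr sort; apply: eq_filter => a; rewrite (semi_hx H1 H2 H3).
Qed.

Lemma last_iota1 m n : last m (iota m.+1 n) = m + n.
Proof. elim: n m => [|n IH] m /=; first by rewrite addn0. by rewrite IH addnS. Qed.

Lemma lcube_chain h R l :
  (forall a, 0 < h a <= l) -> (forall k, 0 < k <= l -> exists a, h a = k) ->
  is_chain (mkseq (lcube h R) l).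
Proof.
move=> H1 H2. rewrite /is_chain size_mkseq. split; last split.
- move=> i Hi. rewrite nth_mkseq //. split.
    apply/andP; split; first by rewrite sort_uniq filter_uniq ?enum_uniq.
    apply/forallP => a. rewrite ffunE mem_sort mem_filter mem_enum andbT /=.
    by case: (ltngtP (h a) i.+1).
  rewrite /cdim /= size_sort size_filter -has_count.
  have [a Ha] := H2 i.+1 ltac:(lia). apply/hasP; exists a; rewrite ?mem_enum ?Ha //.
- move=> i Hi. rewrite nth_mkseq // /vd.
  case: i Hi => [|i] Hi; rewrite ?nth_mkseq ?(ltnW Hi) //; congr pair; apply/ffunP => a; rewrite !ffunE.
    by have := H1 a; case: (ltngtP (h a) 1).
  by case: (ltngtP (h a) i.+1) => e; case: (ltngtP (h a) i.+2) => e' //; lia.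
- case: l H1 H2 => [|l] H1 H2 /=.
    by congr pair; apply/ffunP => a; have := H1 a; lia.
  rewrite /mkseq /= last_map last_iota1 add0n.
  rewrite /vd /final_v; congr pair; apply/ffunP => a. rewrite !ffunE.
  by have := H1 a; case: (ltngtP (h a) l.+1) => e //; lia.
Qed.


Lemma sorted_index (s : seq A) : uniq s -> sorted (fun u v => index u s < index v s) s.
Proof.
elim: s => [|a s IH] //= /andP[nas us].
rewrite (path_sortedE (fun y x z => @ltn_trans (index y (a :: s)) (index x (a :: s)) (index z (a :: s)))).
apply/andP; split.
  apply/allP => v vs /=. by rewrite eqxx; case: eqP => // eav; move: nas; rewrite eav vs.
apply: (sub_in_sorted (P := mem s)) (IH us); last by apply/allP.
move=> u v us' vs' /=. case: eqP => [e|_]; first by move: nas; rewrite e us'.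
by case: eqP => [e|_]; first by move: nas; rewrite e vs'.
Qed.

Lemma Rd_trans d : regular d -> transitive (Rd d).
Proof.
case=> [[_ [[irr tr] _]] _] b a c; rewrite /Rd.
case/orP=> [/eqP->|ab] //. case/orP=> [/eqP<-|bc]; first by rewrite ab orbT.
by rewrite (tr _ _ _ ab bc) orbT.
Qed.

Lemma Rd_anti d : regular d -> antisymmetric (Rd d).
Proof.
case=> [[_ [[irr tr] _]] _] a b /andP[/orP[/eqP->//|ab] /orP[/eqP->//|ba]].
by have := irr a; rewrite (tr _ _ _ ab ba).
Qed.

Lemma lvl_total d h k : regular d -> (forall a b, d.1 a b = (h a < h b)) ->
  {in [pred a | h a == k] &, total (Rd d)}.
Proof.
case=> [[_ [_ tot]] _] H3 a b /= /eqP ha /eqP hb.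
rewrite /Rd. case: (eqVneq a b) => [->|ab]; first by [].
have := tot a b ab; rewrite !H3 ha hb ltnn /= => /orP[->|->]; by rewrite ?orbT.
Qed.

Lemma cstar_dorder cc : is_chain cc -> cstar (dorder_of cc) = cc.
Proof.
move=> Hc. have reg := dorder_regular Hc.
rewrite (@cstar_eq _ (fun a => (hc cc a).+1) (size cc)); first last.
- by [].
- move=> k Hk. have [a Ha] := chain_level_ex Hc (k := k.-1) ltac:(lia).
  exists a; rewrite Ha; lia.
- by move=> a; rewrite /= chain_hc_lt.
apply: (@eq_from_nth _ (init_v A)); first by rewrite size_mkseq.
move=> j; rewrite size_mkseq => Hj. rewrite nth_mkseq //.
rewrite [RHS]surjective_pairing /lcube; congr pair.
  apply/ffunP => a; rewrite ffunE. have [_ ->] := chain_val Hc a; last by [].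
  rewrite !ltnS eqSS. by case: (ltngtP (hc cc a) j).
have [[ucube _] _] := (Hc.1 j Hj, 0). case/andP: ucube => uL _.
apply: (sorted_eq (Rd_trans reg) (Rd_anti reg)).
- apply: (sort_sorted_in (P := [pred a | (hc cc a).+1 == j.+1])).
    apply: lvl_total => //.
  exact: filter_all.
- apply: (sub_in_sorted (P := mem (nth (init_v A) cc j).2)) (sorted_index uL); last by apply/allP.
  move=> u v us vs /= iuv. rewrite /Rd /=.
  move: us vs; rewrite !chain_mem // => /eqP hu /eqP hv. by rewrite -hu -hv eqxx /= iuv orbT.
- apply: uniq_perm; first by rewrite sort_uniq filter_uniq ?enum_uniq.
    by [].
  by move=> a; rewrite mem_sort mem_filter mem_enum andbT chain_mem // eqSS eq_sym.
Qed.

Lemma dorder_cstar (d : dorder A) : regular d -> deq (dorder_of (cstar d)) d.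
Proof.
move=> reg. have reg' := reg.
case: reg' => [[[irr1 tr1] [[irr2 tr2] tot]] [[h [l [H1 [H2 H3]]]] reg3]].
rewrite (cstar_eq H1 H2 H3).
have Hc := lcube_chain (Rd d) H1 H2.
have Hhc : forall a, hc (mkseq (lcube h (Rd d)) l) a = (h a).-1.
  move=> a. have Hk : (h a).-1 < size (mkseq (lcube h (Rd d)) l).
    by rewrite size_mkseq; have := H1 a; lia.
  have := chain_None Hc a Hk. rewrite nth_mkseq /lcube ?ffunE; last by have := H1 a; lia.
  move=> E; apply/esym/eqP; rewrite -E.
  have := H1 a; case: (h a) => // n _. by rewrite ltnn eqxx.
split; move=> a b /=; rewrite !Hhc.
  rewrite H3. have := H1 a; have := H1 b; lia.
rewrite nth_mkseq; last by have := H1 a; lia.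
have ha : ((h a).-1).+1 = h a by have := H1 a; lia.
rewrite /lcube /= ha.
have [hab|hab] := eqVneq (h a) (h b); last first.
  have -> /= : ((h a).-1 == (h b).-1) = false by apply/negbTE; move: hab; have := H1 a; have := H1 b; lia.
  case: (ltngtP (h a) (h b)) hab => // e _.
  + by have := reg3 a b; rewrite H3 e => /(_ isT) [/negbTE ->].
  + by have := reg3 b a; rewrite H3 e => /(_ isT) [_ /negbTE ->].
rewrite hab eqxx /= -hab.
set L := sort _ _.
have sL : sorted (Rd d) L.
  apply: (sort_sorted_in (P := [pred x | h x == h a])); first exact: lvl_total.
  exact: filter_all.
have ma : a \in L by rewrite mem_sort mem_filter mem_enum eqxx.
have mb : b \in L by rewrite mem_sort mem_filter mem_enum hab eqxx.
have Rt := Rd_trans reg.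
case: (ltngtP (index a L) (index b L)) => e.
- have := sorted_ltn_index Rt sL a b ma mb e. rewrite /Rd => /orP[/eqP ab|] //.
  by move: e; rewrite ab ltnn.
- have := sorted_ltn_index Rt sL b a mb ma e. rewrite /Rd => /orP[/eqP ab|ba].
    by move: e; rewrite ab ltnn.
  apply/esym/negbTE/negP => ab. by have := irr2 a; rewrite (tr2 _ _ _ ab ba).
- have ab : a = b by rewrite -(nth_index a ma) e (nth_index a mb).
  by rewrite ab (negbTE (irr2 b)).
Qed.


Lemma act_init (s : {perm A}) : act_cube (init_v A) s = init_v A.
Proof. by rewrite /act_cube /init_v /=; congr pair; apply/ffunP => a; rewrite !ffunE. Qed.

Lemma nth_map_dflt (T U : Type) (f : T -> U) x0 (l : seq T) n :
  nth (f x0) (map f l) n = f (nth x0 l n).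
Proof. by elim: l n => [|x l IH] [|n] //=. Qed.

Lemma index_permV (s : {perm A}) (L : seq A) a : index a (map (s^-1)%g L) = index (s a) L.
Proof. by rewrite -{1}(permK s a) index_map //; apply: perm_inj. Qed.

Lemma mem_permV (s : {perm A}) (L : seq A) a : (a \in map (s^-1)%g L) = (s a \in L).
Proof. by rewrite -{1}(permK s a) mem_map //; apply: perm_inj. Qed.

Lemma nth_act (s : {perm A}) cc k :
  nth (init_v A) (act_chain cc s) k = act_cube (nth (init_v A) cc k) s.
Proof.
rewrite /act_chain -{1}(act_init s).
exact: (nth_map_dflt (fun x => act_cube x s)).
Qed.

Lemma equiv_chain (s : {perm A}) cc :
  deq (dorder_of (act_chain cc s)) (act_dorder (dorder_of cc) s).
Proof.
have Hhc : forall a, hc (act_chain cc s) a = hc cc (s a).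
  move=> a; rewrite /hc /act_chain find_map; apply: eq_find => x.
  by rewrite /preim /= ffunE.
split => a b /=; rewrite !Hhc //.
by rewrite nth_act /= !index_permV.
Qed.

Lemma equiv_cstar (s : {perm A}) (d : dorder A) : regular d ->
  cstar (act_dorder d s) = act_chain (cstar d) s.
Proof.
move=> reg. have reg' := reg.
case: reg' => [[[irr1 tr1] [[irr2 tr2] tot]] [[h [l [H1 [H2 H3]]]] reg3]].
rewrite (cstar_eq H1 H2 H3).
rewrite (@cstar_eq _ (fun a => h (s a)) l); first last.
- by move=> a b /=; rewrite H3.
- move=> k Hk. have [a Ha] := H2 k Hk. exists ((s^-1)%g a). by rewrite permKV.
- by move=> a.
rewrite /act_chain /mkseq -map_comp. apply: eq_map => j /=.
rewrite /lcube /act_cube /=. congr pair.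
  by apply/ffunP => a; rewrite !ffunE.
have RdE : forall a b, Rd (act_dorder d s) a b = Rd d (s a) (s b).
  by move=> a b; rewrite /Rd /= (inj_eq perm_inj).
have Rt := Rd_trans reg. have Ra := Rd_anti reg.
apply: (@sorted_eq _ (Rd (act_dorder d s))).
- move=> b a c; rewrite !RdE; exact: Rt.
- move=> a b; rewrite !RdE => /Ra. exact: perm_inj.
- apply: (sort_sorted_in (P := [pred a | h (s a) == j.+1])); last exact: filter_all.
  move=> a b ha hb; rewrite !RdE. exact: (lvl_total (k := j.+1) reg H3).
- rewrite sorted_map. 
  apply: (@sub_in_sorted _ predT (Rd d)); last first.
    apply: (sort_sorted_in (P := [pred a | h a == j.+1])); last exact: filter_all.
    exact: (lvl_total reg H3).
    by apply/allP.
  by move=> u v _ _; rewrite /= RdE !permKV.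
- apply: uniq_perm.
  + by rewrite sort_uniq filter_uniq ?enum_uniq.
  + by rewrite (map_inj_uniq perm_inj) sort_uniq filter_uniq ?enum_uniq.
  + by move=> a; rewrite mem_permV !mem_sort mem_filter mem_enum mem_filter mem_enum /= !andbT.
Qed.


Lemma filter_nil (T : eqType) (P : pred T) (L : seq T) :
  (forall a, a \in L -> P a = false) -> [seq a <- L | P a] = [::].
Proof.
elim: L => [|b L IH] //= H. rewrite H ?mem_head // IH // => a aL.
by apply: H; rewrite in_cons aL orbT.
Qed.

Lemma size_set_star e i (x : seq (option bool)) : size (set_star e i x) = size x.
Proof. elim: x i => [|[b|] x IH] [|i] //=; by rewrite IH. Qed.

Lemma nth_set_star e i (x : seq (option bool)) p : p < size x ->
  nth None (set_star e i x) p =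
  if (nth None x p == None) && (count (pred1 None) (take p x) == i) then Some e else nth None x p.
Proof.
elim: x i p => [|[b|] x IH] i [|p] //= Hp.
- by rewrite IH.
- by case: i.
- case: i => [|i] /=. by rewrite andbF.
  by rewrite IH // eqSS.
Qed.

Lemma index_filter (L : seq A) (P : pred A) a : a \in L -> P a ->
  index a (filter P L) = count P (take (index a L) L).
Proof.
elim: L => [|b L IH] //= aL Pa.
case: (eqVneq b a) => [->|ba]; first by rewrite Pa /= !eqxx.
rewrite in_cons eq_sym (negbTE ba) /= in aL.
case Pb: (P b) => /=; rewrite ?IH //.
  by rewrite (negbTE ba) Pb. by rewrite Pb.
Qed.

Lemma count_take_idx (L : seq A) (x : seq (option bool)) p : uniq L -> size L = size x ->
  p <= size L ->
  count (fun a => nth None x (index a L) == None) (take p L) = count (pred1 None) (take p x).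
Proof.
move=> uL sLx. elim: p => [|p IH] Hp; first by rewrite !take0.
have Hp' : p < size L by [].
case: L uL sLx Hp Hp' IH => [|a0 L] uL sLx Hp Hp' IH; first by [].
rewrite (take_nth a0 Hp') (take_nth None); last by rewrite -sLx.
rewrite -!cats1 !count_cat IH ?(ltnW Hp') //; congr addn.
move: (index_uniq a0 Hp' uL). set L' := a0 :: L. clearbody L'. by move=> E; rewrite /= E.
Qed.

Section ChainMap.
Variable cc : seq (cube A).
Hypothesis Hc : is_chain cc.

Lemma dims_nth k : k < size cc -> nth 0 (dims cc) k = cdim (nth (init_v A) cc k).
Proof. by move=> Hk; rewrite /dims (nth_map (init_v A)). Qed.

Lemma size_dims : size (dims cc) = size cc.
Proof. by rewrite size_map. Qed.

Lemma dims_pos k : k < size cc -> 0 < nth 0 (dims cc) k.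
Proof. by move=> Hk; rewrite dims_nth //; case: (Hc.1 k Hk). Qed.

Lemma cube_uniq k : k < size cc -> uniq (nth (init_v A) cc k).2.
Proof. by move=> Hk; case: (Hc.1 k Hk) => /andP[]. Qed.

Lemma wnorm_valid k x : k < size cc -> size x = nth 0 (dims cc) k ->
  is_wcell (dims cc) (wnorm (dims cc) (k, x)).
Proof.
move=> Hk Hx. rewrite /wnorm /is_wcell /= size_dims.
case: ifP => [/andP[Hk1 _]|H] /=.
  rewrite Hk1 size_nseq eqxx /=. apply/negP => /andP[_ /allP Ha].
  have Hp := dims_pos Hk1.
  have := Ha (Some false). rewrite mem_nseq Hp eqxx. by move=> /(_ isT).
by rewrite Hk Hx eqxx /= H.
Qed.

Lemma wface_valid z e i : is_wcell (dims cc) z -> is_wcell (dims cc) (wface (dims cc) e i z).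
Proof.
case: z => k x /andP[/andP[Hk /eqP Hx] _]. rewrite /wface /=.
apply: wnorm_valid; first by rewrite -size_dims.
by rewrite size_set_star.
Qed.

Lemma chain_map_norm k x : k < size cc -> size x = nth 0 (dims cc) k ->
  chain_map cc (wnorm (dims cc) (k, x)) = chain_map cc (k, x).
Proof.
move=> Hk Hx. rewrite /wnorm /=. case: ifP => // /andP[Hk1 Hall].
rewrite size_dims in Hk1.
have Hone : forall a, a \in (nth (init_v A) cc k).2 -> nth None x (index a (nth (init_v A) cc k).2) = Some true.
  move=> a aL. apply/eqP. apply: (allP Hall). apply: mem_nth.
  by rewrite Hx dims_nth // /cdim index_mem.
rewrite /chain_map /=; congr pair.
  apply/ffunP => a; rewrite !ffunE.
  case: ifP => aL1.
    rewrite nth_nseq dims_nth // index_mem aL1.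
    move: aL1; rewrite chain_mem // => /eqP hk.
    rewrite chain_mem // -hk (ltn_eqF (ltnSn k)).
    have [_ ->] := chain_val Hc a; last by [].
    by rewrite -hk ltnSn.
  case: ifP => aL0.
    rewrite Hone //. move: aL0; rewrite chain_mem // => /eqP hk.
    have [_ ->] := chain_val Hc a; last by [].
    by rewrite -hk; case: (ltngtP k.+1 k) => //; lia.
  move: aL1 aL0; rewrite !chain_mem // => n1 n0.
  have [_ E] := chain_val Hc a. rewrite !E //.
  rewrite n1 n0. 
  by case: (ltngtP k (hc cc a)) n0 n1 => // e _ /eqP n1'; case: (ltngtP k.+1 (hc cc a)) => //; lia.
transitivity ([::] : seq A).
  by apply: filter_nil => a aL; rewrite nth_nseq dims_nth // index_mem aL.
by symmetry; apply: filter_nil => a aL; rewrite Hone.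
Qed.

Lemma chain_map_set_star k x e i : k < size cc -> size x = nth 0 (dims cc) k ->
  chain_map cc (k, set_star e i x) = yface e i (chain_map cc (k, x)).
Proof.
move=> Hk Hx.
have uL := cube_uniq Hk.
set L := (nth (init_v A) cc k).2 in uL *.
have sL : size L = size x by rewrite Hx dims_nth.
pose P := fun a => nth None x (index a L) == None.
have cnt : forall a, a \in L -> P a ->
    index a [seq b <- L | P b] = count (pred1 None) (take (index a L) x).
  by move=> a aL Pa; rewrite index_filter // count_take_idx // ltnW // index_mem.
rewrite /chain_map /yface /= -/L. congr pair.
- apply/ffunP => a; rewrite !ffunE.
  case aL: (a \in L) => /=.
  + rewrite nth_set_star; last by rewrite -sL index_mem.
    rewrite mem_filter aL andbT.
    case Pa: (nth None x (index a L) == None) => /=; last by [].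
    by rewrite cnt.
  + by rewrite mem_filter aL andbF.
- rewrite -filter_predI. apply: eq_in_filter => a aL /=.
  rewrite nth_set_star; last by rewrite -sL index_mem.
  case Pa: (nth None x (index a L) == None) => /=; last by rewrite Pa andbF.
  rewrite cnt // andbT. move/eqP: Pa => ->.
  by case: (_ == i).
Qed.

Lemma chain_map_face z e i : is_wcell (dims cc) z ->
  chain_map cc (wface (dims cc) e i z) = yface e i (chain_map cc z).
Proof.
case: z => k x /andP[/andP[Hk /eqP Hx] _]. rewrite size_dims in Hk.
rewrite /wface /= chain_map_norm ?size_set_star //.
exact: chain_map_set_star.
Qed.

Lemma chain_map_val k x a : k < size cc ->
  (chain_map cc (k, x)).1 a =
  if hc cc a < k then Some true else if hc cc a == k
  then nth None x (index a (nth (init_v A) cc k).2) else Some false.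
Proof.
move=> Hk.
rewrite /chain_map ffunE /= chain_mem // eq_sym.
have [_ ->] := chain_val Hc a; last by [].
by case: (ltngtP (hc cc a) k).
Qed.


Lemma chain_map_inj w w' : is_wcell (dims cc) w -> is_wcell (dims cc) w' ->
  chain_map cc w = chain_map cc w' -> w = w'.
Proof.
case: w => k x; case: w' => k' x' Hw Hw' E.
have E1 : forall a, (chain_map cc (k, x)).1 a = (chain_map cc (k', x')).1 a by move=> a; rewrite E.
have V := Hw; have V' := Hw'.
case/andP: V => [/andP[Hk /eqP Hx] Hn]; case/andP: V' => [/andP[Hk' /eqP Hx'] Hn'].
rewrite size_dims in Hk Hk'. rewrite dims_nth // in Hx. rewrite dims_nth // in Hx'.
have [a0 _] := chain_level_ex Hc Hk.
have pos : forall k x, is_wcell (dims cc) (k, x) -> forall p, p < size x ->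
    nth None x p = (chain_map cc (k, x)).1 (nth a0 (nth (init_v A) cc k).2 p).
  move=> j y Hy p Hp. case/andP: (Hy) => [/andP[Hj /eqP Hyy] _]. rewrite /= size_dims in Hj.
  rewrite /= dims_nth // /cdim in Hyy.
  rewrite /chain_map ffunE /= mem_nth -?Hyy // index_uniq -?Hyy //. exact: cube_uniq.
have allone : forall k x k', is_wcell (dims cc) (k, x) -> k < k' ->
    (forall a, hc cc a = k -> (chain_map cc (k, x)).1 a = Some true) ->
    k' < size cc -> False.
  move=> j y j' Hy jj' Hv Hj'. case/andP: (Hy) => [/andP[Hj /eqP Hyy] Hny].
  rewrite size_dims in Hj. move/negP: Hny; apply.
  rewrite size_dims (leq_ltn_trans jj' Hj') /=.
  apply/(all_nthP None) => p Hp. apply/eqP.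
  rewrite (pos j y Hy p Hp).
  apply: Hv. apply/esym/eqP. rewrite -chain_mem //. apply: mem_nth.
  by move: Hyy; rewrite /= dims_nth // /cdim => <-.
case: (ltngtP k k') => kk.
- exfalso; apply: (allone k x k') => // a ha.
  by rewrite E1 chain_map_val // ha kk.
- exfalso; apply: (allone k' x' k) => // a ha.
  by rewrite -E1 chain_map_val // ha kk.
subst k'. congr pair.
apply: (@eq_from_nth _ None); first by rewrite Hx Hx'.
move=> p Hp. have Hp' : p < size x' by move: Hx Hx' Hp; rewrite /= => -> ->.
by rewrite (pos k x Hw p Hp) (pos k x' Hw' p Hp') E1.
Qed.

Lemma chain_map_dim z : is_wcell (dims cc) z -> size (chain_map cc z).2 = wdim z.
Proof.
case: z => k x /andP[/andP[Hk /eqP Hx] _]. rewrite /= size_dims in Hk. rewrite /= dims_nth // /cdim in Hx.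
rewrite /chain_map /wdim /= size_filter.
have := count_take_idx (cube_uniq Hk) (esym Hx) (leqnn _). rewrite !take_size -Hx take_size => ->.
by apply: eq_count => b; rewrite eq_sym.
Qed.

End ChainMap.


Lemma filter_index_lt (L : seq A) (P : pred A) a b : uniq L ->
  a \in filter P L -> b \in filter P L ->
  index a (filter P L) < index b (filter P L) -> index a L < index b L.
Proof.
move=> uL ma mb iab.
have Rt : transitive (fun u v => index u L < index v L).
  by move=> y x z; apply: ltn_trans.
have := sorted_filter Rt P (sorted_index uL).
by move/sorted_ltn_index => /(_ Rt a b ma mb iab).
Qed.

Lemma le_dle cc ee : is_chain cc -> is_chain ee ->
  chain_le cc ee -> dle (dorder_of ee) (dorder_of cc).
Proof.
move=> Hc He [F [HF HFc]].
pose z j := (j, nseq (nth 0 (dims cc) j) (@None bool)).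
have Hz : forall j, j < size cc -> is_wcell (dims cc) (z j).
  move=> j Hj. rewrite /is_wcell /= size_dims Hj size_nseq eqxx /=.
  apply/negP => /andP[_ /allP Ha]. have := Ha None. rewrite mem_nseq dims_pos // eqxx.
  by move/(_ isT).
have Hz1 : forall j a, j < size cc -> (chain_map cc (z j)).1 a =
    if hc cc a < j then Some true else if hc cc a == j then None else Some false.
  move=> j a Hj. by rewrite chain_map_val // nth_nseq if_same.
have Hz2 : forall j, j < size cc -> (chain_map cc (z j)).2 = (nth (init_v A) cc j).2.
  move=> j Hj. rewrite /chain_map /=. rewrite (eq_filter (a2 := predT)) ?filter_predT //.
  by move=> a; rewrite nth_nseq if_same.
have key : forall a, let k := (F (z (hc cc a))).1 in
    hc ee a = k /\ forall b, hc cc b <= hc cc a -> hc ee b <= k.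
  move=> a k. have Hj := chain_hc_lt Hc a.
  have [V _ _] := HF _ (Hz _ Hj). have E := HFc _ (Hz _ Hj).
  have [k0 w] : exists kw, F (z (hc cc a)) = kw by eexists.
  case Fz : (F (z (hc cc a))) => [k' w'] in V E k *.
  case/andP: V => [/andP[Hk' _] _]. rewrite /= size_dims in Hk'.
  have Ev : forall c, (chain_map ee (k', w')).1 c = (chain_map cc (z (hc cc a))).1 c by rewrite E.
  split.
    have := Ev a; rewrite Hz1 // ltnn eqxx chain_map_val //.
    by case: (ltngtP (hc ee a) k').
  move=> b hb. have := Ev b; rewrite Hz1 // chain_map_val //.
  case: (ltngtP (hc ee b) k') => //= hbk.
  by case: (ltngtP (hc cc b) (hc cc a)) hb => //=.
split.
- move=> a b /= hab. rewrite ltnNge; apply/negP => hba.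
  have [ka kb] := key a. have := kb b hba. rewrite -ka. lia.
- move=> a b /= /andP[/eqP hab iab].
  have [ka kb] := key a. have [kb' _] := key b.
  rewrite -hab in kb'. rewrite ka kb' eqxx /=.
  have Hj := chain_hc_lt Hc a.
  have [V _ _] := HF _ (Hz _ Hj). have E := HFc _ (Hz _ Hj).
  case Fz : (F (z (hc cc a))) => [k' w'] in V E ka kb' *.
  case/andP: V => [/andP[Hk' _] _]. rewrite /= size_dims in Hk'.
  have E2 := congr1 snd E. rewrite Hz2 // /chain_map /= in E2.
  have ma : a \in (nth (init_v A) cc (hc cc a)).2 by rewrite chain_mem.
  have mb : b \in (nth (init_v A) cc (hc cc a)).2 by rewrite chain_mem // hab.
  rewrite -E2 in ma mb iab.
  exact: (filter_index_lt (cube_uniq He Hk') ma mb iab).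
Qed.


Section Construct.
Variables cc ee : seq (cube A).
Hypotheses (Hc : is_chain cc) (He : is_chain ee)
  (Hd : dle (dorder_of ee) (dorder_of cc)).

Definition lvl (j : nat) : nat :=
  if (nth (init_v A) cc j).2 is a :: _ then hc ee a else 0.

Definition Fw (z : wcell) : wcell :=
  (lvl z.1, [seq (chain_map cc z).1 b | b <- (nth (init_v A) ee (lvl z.1)).2]).

Definition F (z : wcell) : wcell := wnorm (dims ee) (Fw z).

Lemma lvl_spec j : j < size cc -> forall c, hc cc c = j -> hc ee c = lvl j.
Proof.
move=> Hj c hcj. rewrite /lvl.
have [H1 H2] := Hc.1 j Hj.
case E: (nth (init_v A) cc j).2 => [|a L]; first by rewrite /cdim E in H2.
have : a \in (nth (init_v A) cc j).2 by rewrite E mem_head.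
rewrite chain_mem // => /eqP ha.
case: Hd => Hx _.
case: (ltngtP (hc ee c) (hc ee a)) => // e.
- by have := Hx _ _ e; rewrite /= -ha hcj ltnn.
- by have := Hx _ _ e; rewrite /= -ha hcj ltnn.
Qed.

Lemma lvl_lt j : j < size cc -> lvl j < size ee.
Proof.
move=> Hj. have [a ha] := chain_level_ex Hc Hj.
rewrite -(lvl_spec Hj ha). exact: chain_hc_lt.
Qed.

Lemma Fw_map z : is_wcell (dims cc) z -> chain_map ee (Fw z) = chain_map cc z.
Proof.
case: z => j x Hz. have Hz' := Hz.
case/andP: Hz' => [/andP[Hj /eqP Hx] _]. rewrite /= size_dims in Hj.
rewrite /= dims_nth // /cdim in Hx.
have Hm := lvl_lt Hj. set m := lvl j in Hm *.
set f := (chain_map cc (j, x)).1.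
have fv : forall c, f c = if hc cc c < j then Some true else if hc cc c == j
    then nth None x (index c (nth (init_v A) cc j).2) else Some false.
  by move=> c; rewrite /f chain_map_val.
have lv := lvl_spec Hj.
case: Hd => Hx1 Hy1.
have lvlt : forall c, hc ee c < m -> hc cc c < j.
  move=> c hcm. have [a ha] := chain_level_ex Hc Hj.
  have := Hx1 c a. rewrite /= ha (lv a ha). by apply.
have lvgt : forall c, m < hc ee c -> j < hc cc c.
  move=> c hcm. have [a ha] := chain_level_ex Hc Hj.
  have := Hx1 a c. rewrite /= ha (lv a ha). by apply.
have uLm := cube_uniq He Hm.
have uLj := cube_uniq Hc Hj.
have wc : forall c, c \in (nth (init_v A) ee m).2 ->
    nth None [seq f b | b <- (nth (init_v A) ee m).2] (index c (nth (init_v A) ee m).2) = f c.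
  move=> c cL. by rewrite (nth_map c) ?index_mem // nth_index.
rewrite /Fw /= -/m. set w := [seq f b | b <- _].
have E1 : forall c, (chain_map ee (m, w)).1 c = f c.
  move=> c. rewrite chain_map_val //.
  case: (ltngtP (hc ee c) m) => e.
  - by rewrite fv (lvlt _ e).
  - rewrite fv. have := lvgt _ e. by case: (ltngtP (hc cc c) j).
  - by rewrite wc // chain_mem // e.
rewrite [LHS]surjective_pairing [RHS]surjective_pairing.
congr pair; first by apply/ffunP => c; rewrite E1.
rewrite /chain_map /=.
pose R := fun u v => index u (nth (init_v A) ee m).2 < index v (nth (init_v A) ee m).2.
have Rt : transitive R by move=> y x' z; apply: ltn_trans.
apply: (irr_sorted_eq Rt (fun u => ltnn _)).
- exact: (sorted_filter Rt _ (sorted_index uLm)).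
- apply: (sorted_filter Rt).
  apply: (sub_in_sorted (P := mem (nth (init_v A) cc j).2)) (sorted_index uLj); last by apply/allP.
  move=> u v uL vL iuv.
  have hu : hc cc u = j by apply/esym/eqP; rewrite -chain_mem.
  have hv : hc cc v = j by apply/esym/eqP; rewrite -chain_mem.
  have := Hy1 u v. rewrite /= hu hv eqxx iuv /= => /(_ isT) /andP[_].
  by rewrite (lv u hu).
- move=> c. rewrite !mem_filter.
  case cL: (c \in (nth (init_v A) ee m).2); rewrite /= ?andbF ?andbT.
  + rewrite wc // fv.
    move: cL; rewrite chain_mem // => /eqP hm.
    case: (ltngtP (hc cc c) j) => e /=.
    * by rewrite chain_mem // (gtn_eqF e) andbF.
    * by rewrite chain_mem // (ltn_eqF e) andbF.
    * by rewrite chain_mem // e eqxx andbT.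
  + case cj: (c \in (nth (init_v A) cc j).2); rewrite ?andbF //.
    move: cj cL; rewrite !chain_mem // => /eqP cj. by rewrite (lv c (esym cj)) eqxx.
Qed.

Lemma F_valid z : is_wcell (dims cc) z -> is_wcell (dims ee) (F z).
Proof.
case: z => j x Hz. have Hz' := Hz.
case/andP: Hz' => [/andP[Hj _] _]. rewrite /= size_dims in Hj.
apply: wnorm_valid => //; first exact: lvl_lt.
by rewrite size_map dims_nth // lvl_lt.
Qed.

Lemma F_map z : is_wcell (dims cc) z -> chain_map ee (F z) = chain_map cc z.
Proof.
case: z => j x Hz. have Hz' := Hz.
case/andP: Hz' => [/andP[Hj _] _]. rewrite /= size_dims in Hj.
rewrite /F /Fw /= chain_map_norm //; first exact: (Fw_map Hz).
- exact: lvl_lt.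
- by rewrite size_map dims_nth // lvl_lt.
Qed.

Lemma dle_le : chain_le cc ee.
Proof.
exists F; split; last exact: F_map.
move=> z Hz. have FV := F_valid Hz.
have Hdim : wdim (F z) = wdim z by rewrite -(chain_map_dim He FV) F_map // chain_map_dim.
split => // e i _.
apply: (chain_map_inj He).
- exact: F_valid (wface_valid Hc e i Hz).
- exact: wface_valid.
rewrite F_map ?wface_valid // chain_map_face // chain_map_face // F_map //.
Qed.

End Construct.


Lemma chain_cstar (d : dorder A) : regular d -> is_chain (cstar d).
Proof.
move=> reg; case: (reg) => [_ [[h [l [H1 [H2 H3]]]] _]].
rewrite (cstar_eq H1 H2 H3); exact: lcube_chain.
Qed.

Lemma deq_sym (x y : dorder A) : deq x y -> deq y x.
Proof. by case=> e1 e2; split => a b; rewrite ?e1 ?e2. Qed.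

Lemma dle_deq (x x' y y' : dorder A) : deq x x' -> deq y y' -> (dle x y <-> dle x' y').
Proof.
case=> [ex1 ex2] [ey1 ey2]; rewrite /dle; split; case=> H1 H2; split => a b.
- by rewrite -ex1 -ey1; apply: H1.
- by rewrite -ex2 -ey2; apply: H2.
- by rewrite ex1 ey1; apply: H1.
- by rewrite ex2 ey2; apply: H2.
Qed.
End S.

Theorem proposition4p9 (A : finType) :
  (* the maps are well defined *)
  (forall cc : seq (cube A), is_chain cc -> regular (dorder_of cc))
  /\ (forall d : dorder A, regular d -> is_chain (cstar d))
  (* mutually inverse *)
  /\ (forall cc : seq (cube A), is_chain cc -> cstar (dorder_of cc) = cc)
  /\ (forall d : dorder A, regular d -> deq (dorder_of (cstar d)) d)
  (* order isomorphisms: Ch(Y^A) ≅ (R(A), ⊒) *)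
  /\ (forall cc ee : seq (cube A), is_chain cc -> is_chain ee ->
        (chain_le cc ee <-> dle (dorder_of ee) (dorder_of cc)))
  /\ (forall d d' : dorder A, regular d -> regular d' ->
        (dle d' d <-> chain_le (cstar d) (cstar d')))
  (* Σ_A-equivariance *)
  /\ (forall (s : {perm A}) (cc : seq (cube A)), is_chain cc ->
        deq (dorder_of (act_chain cc s)) (act_dorder (dorder_of cc) s))
  /\ (forall (s : {perm A}) (d : dorder A), regular d ->
        cstar (act_dorder d s) = act_chain (cstar d) s).
Proof.
split; first exact: dorder_regular.
split; first exact: chain_cstar.
split; first exact: cstar_dorder.
split; first exact: dorder_cstar.
have P5 : forall cc ee : seq (cube A), is_chain cc -> is_chain ee ->
        (chain_le cc ee <-> dle (dorder_of ee) (dorder_of cc)).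
  move=> cc ee Hc He; split; [exact: le_dle | exact: dle_le].
split; first exact: P5.
split.
  move=> d d' reg reg'.
  rewrite (P5 _ _ (chain_cstar reg) (chain_cstar reg')).
  by apply: dle_deq; apply: deq_sym; apply: dorder_cstar.
split; first by move=> s cc _; exact: equiv_chain.
exact: equiv_cstar.
Qed.
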